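(* In the $L^\infty$ setting of the context with $E=\mathbb C$ (so $D=L^\infty_\mu(\Omega)$ and $A=L^\infty_\mu(\Omega)$), if $G$ acts metrically freely then for every finite $F\subset G$ and $a_g\in L^\infty_\mu(\Omega)$, $$\Big\|\sum_{g\in F}a_gT_g\Big\|=\operatorname{ess\,sup}_{x\in\Omega}\sum_{g\in F}|a_g(x)|.$$
   Context: $L^\infty$ setting: $(\Omega,\mu)$ is a measure space with $\sigma$-additive $\sigma$-finite measure $\mu$, $G$ a discrete group, $\{\alpha_g\}_{g\in G}$ a group of invertible measurable maps of $\Omega$ ($\alpha_{gh}=\alpha_g\circ\alpha_h$, $\alpha_e=\mathrm{id}$) such that $\alpha_g,\alpha_g^{-1}$ preserve $\mu$-null sets. $A=L^\infty_\mu(\Omega)$ acts on $D=L^\infty_\mu(\Omega)$ by multiplication and $(T_gf)(x)=f(\alpha_g^{-1}(x))$. $G$ acts metrically freely if for every finite $\{g_1,\dots,g_k\}\subset G$ and measurable $\Delta$ with $\mu(\Delta)>0$ there is measurable $\Delta'\subset\Delta$, $\mu(\Delta')>0$, with $\mu(\alpha_{g_i}(\Delta')\cap\alpha_{g_j}(\Delta'))=0$ for $i\neq j$. *)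

(* Defs.v *)
From HB Require Import structures.
From mathcomp Require Import all_boot all_order all_algebra.
From mathcomp Require Import monoid.
From mathcomp Require Import complex.
From mathcomp Require Import all_classical all_reals all_analysis.

Set Implicit Arguments.
Unset Strict Implicit.
Unset Printing Implicit Defensive.

Import Order.TTheory GRing.Theory Num.Theory.
Import numFieldNormedType.Exports.

Local Open Scope classical_set_scope.
Local Open Scope ring_scope.

Definition cabs {R : realType} (z : R[i]) : R := complex.Re `|z|.

Definition cmeasurable {d} {T : measurableType d} {R : realType}
  (f : T -> R[i]) : Prop :=
  measurable_fun setT (fun x => complex.Re (f x)) /\
  measurable_fun setT (fun x => complex.Im (f x)).

(* the L^infty norm ||f||_oo = ess sup |f| (0 when mu is the zero measure) *)
Definition Linf_norm {d} {T : measurableType d} {R : realType}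
  (mu : {measure set T -> \bar R}) (f : T -> R[i]) : \bar R :=
  Lnorm mu +oo%E (fun x => (cabs (f x))%:E).

Definition is_Linf {d} {T : measurableType d} {R : realType}
  (mu : {measure set T -> \bar R}) (f : T -> R[i]) : Prop :=
  cmeasurable f /\ (Linf_norm mu f < +oo)%E.

Definition Tg {G : groupType} {T : Type} {R : realType}
  (alpha : G -> T -> T) (g : G) (f : T -> R[i]) : T -> R[i] :=
  fun x => f (alpha (g^-1)%g x).

Definition sumOp {G : groupType} {T : Type} {R : realType}
  (alpha : G -> T -> T) (F : seq G) (a : G -> T -> R[i]) (f : T -> R[i])
  : T -> R[i] :=
  fun x => \sum_(g <- F) a g x * Tg alpha g f x.

Definition Linf_opnorm {d} {T : measurableType d} {R : realType}
  (mu : {measure set T -> \bar R}) (Op : (T -> R[i]) -> (T -> R[i]))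
  : \bar R :=
  ereal_sup [set Linf_norm mu (Op f) |
             f in [set f | is_Linf mu f /\ (Linf_norm mu f <= 1)%E]].

Definition metrically_free {d} {T : measurableType d} {R : realType}
  {G : groupType} (mu : {measure set T -> \bar R}) (alpha : G -> T -> T)
  : Prop :=
  forall (s : seq G) (D : set T), uniq s -> measurable D -> (0 < mu D)%E ->
  exists D' : set T,
    [/\ measurable D', D' `<=` D, (0 < mu D')%E &
        forall g h, g \in s -> h \in s -> g != h ->
          mu ((alpha g @` D') `&` (alpha h @` D')) = 0%E].

(* Main.v *)
Require Import Defs.
From HB Require Import structures.
From mathcomp Require Import all_boot all_order all_algebra.
From mathcomp Require Import monoid.
From mathcomp Require Import complex.
From mathcomp Require Import all_classical all_reals all_analysis.
From mathcomp Require Import measurable_realfun realfun ess_sup_inf hoelder.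
From mathcomp Require Import ring lra.
Import Order.TTheory GRing.Theory Num.Theory.
Import numFieldNormedType.Exports.
Local Open Scope classical_set_scope.
Local Open Scope ring_scope.
Local Open Scope complex_scope.

Section H.
Context {R : realType}.

Lemma normc_cabs (z : R[i]) : `|z| = (cabs z)%:C.
Proof. by rewrite /cabs normc_def. Qed.

Lemma cabsE (z : R[i]) : cabs z = Num.sqrt (complex.Re z ^+ 2 + complex.Im z ^+ 2).
Proof. by rewrite /cabs normc_def. Qed.

Lemma cabs_ge0 (z : R[i]) : 0 <= cabs z.
Proof. by rewrite cabsE sqrtr_ge0. Qed.

Definition psi (z : R[i]) : R[i] := conjc z / `|z|.

Lemma mul_conj (z : R[i]) : z * conjc z = `|z| ^+ 2.
Proof.
rewrite -add_Re2_Im2; case: z => a b /=; apply/eqP; rewrite eq_complex /=.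
apply/andP; split; apply/eqP; ring.
Qed.

Lemma mul_psi (z : R[i]) : z * psi z = `|z|.
Proof.
rewrite /psi mulrA mul_conj; have [->|nz] := eqVneq `|z| 0; first by rewrite invr0 mulr0.
by rewrite expr2 mulfK.
Qed.

Lemma norm_conj (z : R[i]) : `|conjc z| = `|z|.
Proof. by rewrite !normc_def; case: z => a b /=; rewrite sqrrN. Qed.

Lemma norm_psi (z : R[i]) : `|psi z| <= 1.
Proof.
have [->|nz] := eqVneq z 0; first by rewrite /psi normr0 invr0 mulr0 normr0 ler01.
rewrite /psi normrM normrV ?unitfE ?normr_eq0 // norm_conj (ger0_norm (normr_ge0 z)).
by rewrite mulfV ?normr_eq0.
Qed.

Lemma psiRe (z : R[i]) : complex.Re (psi z) = complex.Re z * (cabs z)^-1.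
Proof.
rewrite /psi normc_cabs -fmorphV; case: z => a b /=; ring.
Qed.

Lemma psiIm (z : R[i]) : complex.Im (psi z) = - complex.Im z * (cabs z)^-1.
Proof.
rewrite /psi normc_cabs -fmorphV; case: z => a b /=; ring.
Qed.

Lemma measurable_invR : measurable_fun [set: R] (@GRing.inv R).
Proof.
rewrite (_ : GRing.inv = fun t : R => if t == 0 then 0 else t^-1); last first.
  by apply/funext => t; case: eqP => // ->; rewrite invr0.
apply: measurable_fun_if => //.
- apply: (measurable_fun_bool true).
  rewrite setTI (_ : _ @^-1` _ = [set 0]); first exact: measurable_set1.
  by apply/seteqP; split => t /=; case: eqP.
- idtac.
- rewrite setTI (_ : _ @^-1` _ = ~` [set 0]); last first.
    by apply/seteqP; split => t /=; case: eqP.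
  apply: open_continuous_measurable_fun.
    by rewrite openC; exact: closed_eq.
  move=> x; rewrite inE /= => x0; apply: inv_continuous; exact/eqP.
Qed.

Lemma measurable_sqrtR : measurable_fun [set: R] (@Num.sqrt R).
Proof. exact: continuous_measurable_fun (@sqrt_continuous R). Qed.

Context {d} {T : measurableType d}.

Lemma cmeas_cabs (f : T -> R[i]) : cmeasurable f ->
  measurable_fun setT (fun x => cabs (f x)).
Proof.
move=> [mre mim].
rewrite (_ : (fun x => cabs (f x)) = Num.sqrt \o
   (fun x => complex.Re (f x) ^+ 2 + complex.Im (f x) ^+ 2)); last first.
  by apply/funext => x; rewrite /= cabsE.
apply: measurableT_comp; first exact: measurable_sqrtR.
by apply: measurable_funD; apply: measurable_funX.
Qed.

Lemma cmeas_psi (f : T -> R[i]) : cmeasurable f ->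
  cmeasurable (fun x => psi (f x)).
Proof.
move=> mf; have mc := cmeas_cabs _ mf; move: mf => [mre mim]; split.
- rewrite (_ : (fun x => _) = (fun x => complex.Re (f x) * (cabs (f x))^-1)); last first.
    by apply/funext => x; rewrite psiRe.
  apply: measurable_funM => //; apply: measurableT_comp => //.
  exact: measurable_invR.
- rewrite (_ : (fun x => _) = (fun x => - complex.Im (f x) * (cabs (f x))^-1)); last first.
    by apply/funext => x; rewrite psiIm.
  apply: measurable_funM => //; first exact: measurable_funN.
  apply: measurableT_comp => //; exact: measurable_invR.
Qed.

Lemma cmeas_comp (f : T -> R[i]) (h : T -> T) : measurable_fun setT h ->
  cmeasurable f -> cmeasurable (fun x => f (h x)).
Proof.
move=> mh [mre mim]; split.
- exact: (measurableT_comp (f := fun x => complex.Re (f x))).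
- exact: (measurableT_comp (f := fun x => complex.Im (f x))).
Qed.

Lemma cmeas_if (c : T -> bool) (f g : T -> R[i]) : measurable_fun setT c ->
  cmeasurable f -> cmeasurable g -> cmeasurable (fun x => if c x then f x else g x).
Proof.
move=> mc [mf1 mf2] [mg1 mg2]; split.
- rewrite (_ : (fun x => _) = (fun x => if c x then complex.Re (f x) else complex.Re (g x))).
    exact: measurable_fun_ifT.
  by apply/funext => x; case: (c x).
- rewrite (_ : (fun x => _) = (fun x => if c x then complex.Im (f x) else complex.Im (g x))).
    exact: measurable_fun_ifT.
  by apply/funext => x; case: (c x).
Qed.

Lemma cmeas_cst (z : R[i]) : cmeasurable (fun _ : T => z).
Proof. by split; exact: measurable_cst. Qed.
End H.

Section AE.
Context {R : realType} {d} {T : measurableType d} (mu : {measure set T -> \bar R}).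

Lemma ae_seq {I : eqType} (s : seq I) (P : I -> T -> Prop) :
  (forall i, i \in s -> \forall x \ae mu, P i x) ->
  \forall x \ae mu, forall i, i \in s -> P i x.
Proof.
elim: s => [|j s IH] H; first by apply: aeW => x i.
have h1 := H j (mem_head _ _).
have h2 : \forall x \ae mu, forall i, i \in s -> P i x.
  by apply: IH => i iS; apply: H; rewrite inE iS orbT.
apply: filterS2 h1 h2 => x h1 h2 i; rewrite inE => /orP[/eqP->//|]; exact: h2.
Qed.

Lemma ae_of_null (P : T -> Prop) (N : set T) : measurable N -> mu N = 0%E ->
  (forall x, ~ P x -> N x) -> \forall x \ae mu, P x.
Proof. by move=> mN N0 HN; exists N; split => // x /= /HN. Qed.

Lemma null_of_ae (P : T -> Prop) : (\forall x \ae mu, P x) ->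
  exists N, [/\ measurable N, mu N = 0%E & forall x, ~ P x -> N x].
Proof. by move=> [N [mN N0 HN]]; exists N; split => // x Px; apply: HN. Qed.
End AE.
Arguments null_of_ae {R d T mu P}.
Arguments ae_of_null {R d T mu P N}.
Arguments ae_seq {R d T mu I s P}.

Lemma cabs_real {R : realType} (t : R) : 0 <= t -> cabs (t%:C) = t.
Proof. by move=> t0; rewrite /cabs ger0_norm ?ler0c. Qed.

Lemma ereal_between (R : realType) (x y : \bar R) : (x < y)%E ->
  exists r : R, (x < r%:E < y)%E.
Proof.
case: x => [a| |]; case: y => [b| |] //=.
- rewrite lte_fin => ab; exists ((a + b) / 2); rewrite !lte_fin.
  by have := midf_lt ab => -[-> ->].
- by move=> _; exists (a + 1); rewrite !lte_fin ltey andbT ltrDl ltr01.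
- by move=> _; exists (b - 1); rewrite !lte_fin ltNye /= gtrDl ltrN10.
- by move=> _; exists 0; rewrite ltNye ltey.
Qed.

Fixpoint ff {G : groupType} {T : Type} {R : realType} (alpha : G -> T -> T)
  (a : G -> T -> R[i]) (D : set T) (s : seq G) (y : T) : R[i] :=
  match s with
  | [::] => 0
  | g :: s' => if alpha g y \in D then psi (a g (alpha g y)) else ff alpha a D s' y
  end.

Lemma ff_le1 {G : groupType} {T : Type} {R : realType} (alpha : G -> T -> T)
  (a : G -> T -> R[i]) (D : set T) s y : cabs (ff alpha a D s y) <= 1.
Proof.
elim: s => [|g s IH] /=; first by by rewrite (cabs_real _ (lexx 0)) ler01.
case: ifP => // _.
have := norm_psi (a g (alpha g y)); rewrite normc_cabs -(@lecR R) //.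
Qed.

Lemma ff_val {G : groupType} {T : Type} {R : realType} (alpha : G -> T -> T)
  (a : G -> T -> R[i]) (D : set T) s y g : g \in s -> D (alpha g y) ->
  (forall h, h \in s -> h != g -> ~ D (alpha h y)) ->
  ff alpha a D s y = psi (a g (alpha g y)).
Proof.
elim: s => [|h s IH] //= gs Dg Hh.
have [hg|hg] := eqVneq h g.
  by subst h; rewrite ifT // in_setE.
rewrite ifF; last first.
  apply/negbTE; apply/negP; rewrite in_setE => Dh; exact: (Hh h (mem_head _ _) hg).
apply: IH => //.
  by move: gs; rewrite inE eq_sym (negbTE hg).
by move=> k ks; apply: Hh; rewrite inE ks orbT.
Qed.

Lemma LnE {R : realType} {d} {T : measurableType d} (mu : {measure set T -> \bar R})
  (h : T -> R) : (0 < mu setT)%E ->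
  Lnorm mu +oo%E (fun x => (h x)%:E) = ess_sup mu (fun x => (`|h x|)%:E).
Proof. by move=> mu0; rewrite unlock mu0. Qed.

Lemma Ln0 {R : realType} {d} {T : measurableType d} (mu : {measure set T -> \bar R})
  (h : T -> R) : ~~ (0 < mu setT)%E -> Lnorm mu +oo%E (fun x => (h x)%:E) = 0%E.
Proof. by move=> mu0; rewrite unlock (negbTE mu0). Qed.

Local Close Scope complex_scope.
Theorem mainTheorem8 (R : realType) (d : measure_display) (Omega : measurableType d)
  (mu : {measure set Omega -> \bar R}) (G : groupType) (alpha : G -> Omega -> Omega)
  (mu_sfin : sigma_finite setT mu)
  (alpha_mul : forall g h : G, alpha (g * h)%g = alpha g \o alpha h)
  (alpha_one : alpha 1%g = id)
  (alpha_meas : forall g : G, measurable_fun setT (alpha g))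
  (alpha_null : forall (g : G) (N : set Omega), measurable N -> mu N = 0%E ->
      mu (alpha g @` N) = 0%E /\ mu (alpha g @^-1` N) = 0%E)
  (free : metrically_free mu alpha)
  (F : seq G) (F_uniq : uniq F) (a : G -> Omega -> R[i])
  (a_Linf : forall g : G, g \in F -> is_Linf mu (a g)) :
  Linf_opnorm mu (sumOp alpha F a) =
  Lnorm mu +oo%E (fun x => (\sum_(g <- F) cabs (a g x))%:E).
Proof.
set S := fun x => \sum_(g <- F) cabs (a g x).
have S0 x : 0 <= S x by apply: sumr_ge0 => g _; exact: cabs_ge0.
have alpha_K g x : alpha (g^-1)%g (alpha g x) = x.
  by rewrite -[LHS]/((alpha (g^-1)%g \o alpha g) x) -alpha_mul mulVg alpha_one.
have alpha_K' g x : alpha g (alpha (g^-1)%g x) = x.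
  by rewrite -[LHS]/((alpha g \o alpha (g^-1)%g) x) -alpha_mul mulgV alpha_one.
have mpre g A : measurable A -> measurable (alpha g @^-1` A).
  by move=> mA; have := alpha_meas g measurableT _ mA; rewrite setTI.
have f0P : [set f | is_Linf mu f /\ (Linf_norm mu f <= 1)%E] (fun _ => 0).
  have Lf0 : Linf_norm mu (fun _ : Omega => 0 : R[i]) = 0%E.
    rewrite /Linf_norm (cabs_real _ (lexx 0)).
    case: (boolP (0 < mu setT)%E) => mu0; last by rewrite Ln0.
    by rewrite LnE // normr0 ess_sup_cst.
  split; last by rewrite Lf0.
  by split; [exact: cmeas_cst| rewrite Lf0 ltey].
case: (boolP (0 < mu setT)%E) => mu0; last first.
  rewrite Ln0 //; apply/eqP; rewrite eq_le; apply/andP; split.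
    by apply/ereal_supP => _ [f _ <-]; rewrite /Linf_norm Ln0.
  apply: le_trans (ereal_sup_ubound _); last by exists (fun _ => 0).
  by rewrite /Linf_norm Ln0.
rewrite LnE //; apply/eqP; rewrite eq_le; apply/andP; split.
  apply/ereal_supP => _ [f [[fmeas fLinf] f1] <-].
  rewrite /Linf_norm LnE //; apply: le_ess_sup.
  rewrite /Linf_norm LnE // in f1.
  have hf : \forall x \ae mu, (`|cabs (f x)|%:E <= 1)%E by apply/ess_supP.
  have hfg : \forall x \ae mu, forall g, g \in F -> cabs (f (alpha (g^-1)%g x)) <= 1.
    apply: ae_seq => g _.
    have [N [mN N0 HN]] := null_of_ae hf.
    apply: (@ae_of_null _ _ _ mu _ (alpha (g^-1)%g @^-1` N)).
    - exact: mpre.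
    - exact: (alpha_null _ _ mN N0).2.
    - move=> x hx; apply: HN => h; apply: hx.
      by rewrite ger0_norm ?cabs_ge0 // lee_fin in h.
  apply: filterS hfg => x hx.
  rewrite lee_fin !ger0_norm ?cabs_ge0 ?S0 //.
  suff : `|sumOp alpha F a f x| <= (S x)%:C%C by rewrite normc_cabs lecR.
  rewrite /sumOp /Tg /S rmorph_sum /=.
  apply: le_trans (ler_norm_sum _ _ _) _.
  rewrite big_seq [X in _ <= X]big_seq; apply: ler_sum => g gF.
  rewrite normrM !normc_cabs -rmorphM /= lecR.
  exact: ler_piMr (cabs_ge0 _) (hx g gF).
have mS : measurable_fun setT S.
  rewrite /S; have : {subset F <= F} by [].
  elim: {-2}F => [|g s IH] sF.
    by rewrite (_ : (fun x => _) = cst 0); [exact: measurable_cst|apply/funext => x; rewrite big_nil].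
  rewrite (_ : (fun x => _) = (fun x => cabs (a g x) + \sum_(h <- s) cabs (a h x))); last first.
    by apply/funext => x; rewrite big_cons.
  apply: measurable_funD.
    by apply: cmeas_cabs; exact: (a_Linf g (sF g (mem_head _ _))).1.
  by apply: IH => h hs; apply: sF; rewrite inE hs orbT.
set M := ess_sup mu _.
rewrite /Linf_opnorm; set sup := ereal_sup _.
suff key : forall r : R, (r%:E < M)%E -> (r%:E <= sup)%E.
  rewrite leNgt; apply/negP => /ereal_between [r /andP[h1 h2]].
  by have := key r h2; rewrite leNgt h1.
move=> r rM.
set Delta := S @^-1` `]r, +oo[.
have mD : measurable Delta.
  by have := mS measurableT _ (measurable_itv `]r, +oo[); rewrite setTI.
have muD : (0 < mu Delta)%E.
  rewrite lt0e measure_ge0 andbT; apply/eqP => D0.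
  have : (M <= r%:E)%E.
    apply/ess_supP; apply: (@ae_of_null _ _ _ mu _ Delta mD D0) => x hx.
    rewrite /Delta /= in_itv /= andbT ltNge; apply/negP => Sx; apply: hx.
    by rewrite lee_fin (ger0_norm (S0 x)).
  by move=> h; have := lt_le_trans rM h; rewrite ltxx.
have uF : uniq (map (fun g => (g^-1)%g) F) by rewrite map_inj_uniq //; exact: invg_inj.
have [D' [mD' D'D D'pos Hdis]] := free _ _ uF mD muD.
have imgE k : alpha k @` D' = alpha (k^-1)%g @^-1` D'.
  apply/seteqP; split => x /=.
    by move=> [y Dy <-]; rewrite alpha_K.
  by move=> Dx; exists (alpha (k^-1)%g x) => //; rewrite alpha_K'.
set f := ff alpha a D' F.
have fmeas : forall s, {subset s <= F} -> cmeasurable (ff alpha a D' s).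
  elim => [|g s IH] sF /=; first exact: cmeas_cst.
  apply: cmeas_if.
  - apply: (measurable_fun_bool true).
    rewrite setTI (_ : _ @^-1` _ = alpha g @^-1` D'); first exact: mpre.
    by apply/seteqP; split => x /=; [move=> /set_mem | move=> /mem_set].
  - apply: cmeas_psi; apply: cmeas_comp => //.
    exact: (a_Linf g (sF g (mem_head _ _))).1.
  - by apply: IH => h hs; apply: sF; rewrite inE hs orbT.
have fn1 : (Linf_norm mu f <= 1)%E.
  rewrite /Linf_norm LnE //; apply/ess_supP; apply: aeW => x.
  by rewrite ger0_norm ?cabs_ge0 // lee_fin; exact: ff_le1.
have fP : [set f | is_Linf mu f /\ (Linf_norm mu f <= 1)%E] f.
  split => //; split; first exact: fmeas.
  by apply: le_lt_trans fn1 _; exact: ltey.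
apply: le_trans (ereal_sup_ubound _); last by exists f.
rewrite /Linf_norm LnE // ess_supEae; apply/ereal_infP => y hy.
rewrite leNgt; apply/negP => yr.
have good : \forall x \ae mu, forall g, g \in F -> forall h, h \in F ->
    h != g -> ~ (D' x /\ D' (alpha h (alpha (g^-1)%g x))).
  apply: ae_seq => g gF; apply: ae_seq => h hF.
  set I := (alpha (g^-1)%g @` D') `&` (alpha (h^-1)%g @` D').
  have mI : measurable I by rewrite /I !imgE; apply: measurableI; exact: mpre.
  case: (eqVneq h g) => [->|hg].
    by apply: aeW => x.
  have I0 : mu I = 0%E.
    apply: Hdis; rewrite ?map_f //.
    by apply/negP => /eqP /invg_inj /eqP; rewrite eq_sym (negbTE hg).
  apply: (@ae_of_null _ _ _ mu _ (alpha (g^-1)%g @^-1` I)).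
  - exact: mpre.
  - exact: (alpha_null _ _ mI I0).2.
  - move=> x; apply: contra_notP => nI _ [Dx Dh]; apply: nI; split.
      by exists x.
    by exists (alpha h (alpha (g^-1)%g x)) => //; rewrite alpha_K.
have nD : \forall x \ae mu, ~ D' x.
  apply: filterS2 good hy => x gx hx Dx.
  have E : sumOp alpha F a f x = \sum_(g <- F) `|a g x|.
    rewrite /sumOp /Tg big_seq [RHS]big_seq; apply: eq_bigr => g gF.
    rewrite /f (@ff_val _ _ _ _ _ _ _ _ g) // ?alpha_K' ?mul_psi //.
    move=> h hF hg Dh; exact: (gx g gF h hF hg (conj Dx Dh)).
  have ES : cabs (sumOp alpha F a f x) = S x.
    rewrite E (eq_bigr (fun g => (cabs (a g x))%:C%C)); last by move=> g _; rewrite normc_cabs.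
    rewrite -rmorph_sum cabs_real //; exact: S0.
  have : r < S x by have := D'D x Dx; rewrite /Delta /= in_itv /= andbT.
  rewrite ES ger0_norm ?S0 // in hx.
  move=> rS; have := le_lt_trans hx yr; rewrite lte_fin => Sr.
  by have := lt_trans rS Sr; rewrite ltxx.
have [N [mN N0 HN]] := null_of_ae nD.
have : (mu D' <= mu N)%E.
  by apply: le_measure; rewrite ?inE // => x Dx; apply: HN.
by rewrite N0 leNgt D'pos.
Qed.
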